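(* Let $p$ be an odd prime, $q=p^m$, and let $N$ be a positive divisor of $p-1$ with $\gcd(N,\frac{q-1}{p-1})=1$. Let $\theta$ be a primitive $\frac{q-1}{N}$-th root of unity in $\mathbb{F}_q$. Then for any $c\in\mathbb{F}_q^*$, \[\sum_{\lambda\in\mathbb{F}_p^*}\sum_{i=0}^{\frac{q-1}{N}-1}\zeta_p^{\mathrm{Tr}_{q/p}(\lambda c\theta^i)}=-\frac{p-1}{N},\] and for any $a\in\mathbb{F}_q$, \[\sum_{\lambda\in\mathbb{F}_p^*}\sum_{i=0}^{\frac{q-1}{N}-1}\zeta_p^{\mathrm{Tr}_{q/p}(\lambda c\theta^i)}\eta(\lambda a\theta^i)=\frac{p-1}{N}\,\eta(ac)\sum_{x\in\mathbb{F}_q^*}\zeta_p^{\mathrm{Tr}_{q/p}(x)}\eta(x).\]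
   Context: $\zeta_p=e^{2\pi\mathrm{i}/p}$; $\mathrm{Tr}_{q/p}$ is the trace $\mathbb{F}_q\to\mathbb{F}_p$; $\eta$ is the quadratic character of $\mathbb{F}_q$ with $\eta(0)=0$. *)

(* Defs.v *)
From HB Require Import structures.
From mathcomp Require Import all_boot all_order all_algebra all_field.
Set Implicit Arguments. Unset Strict Implicit. Unset Printing Implicit Defensive.
Import Order.TTheory GRing.Theory Num.Theory.
Local Open Scope ring_scope.

(* zeta_p = e^{2 pi i / p} in the algebraic complex numbers: p.-root (-1)
   is the p-th root of -1 with minimal nonnegative argument, i.e. e^{i pi/p}. *)
Definition zeta (p : nat) : algC := (p.-root (-1 : algC)) ^+ 2.

Definition trF (F : finFieldType) (p m : nat) (x : F) : F :=
  \sum_(j < m) x ^+ (p ^ j).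

Definition tr_nat (F : finFieldType) (p m : nat) (x : F) : nat :=
  odflt 0%N (omap (@nat_of_ord p) [pick k : 'I_p | (k%:R : F) == trF p m x]).

Definition psi (F : finFieldType) (p m : nat) (x : F) : algC :=
  zeta p ^+ tr_nat p m x.

Definition qchar (F : finFieldType) (x : F) : algC :=
  if x == 0 then 0 else if [exists y : F, y ^+ 2 == x] then 1 else -1.

(* Main.v *)
Require Import Defs.
From HB Require Import structures.
From mathcomp Require Import all_boot all_order all_algebra all_field.
Import Order.TTheory GRing.Theory Num.Theory.
Local Open Scope ring_scope.
From mathcomp Require Import ring zify.
From mathcomp Require cyclic.
Set Implicit Arguments. Unset Strict Implicit.


Lemma expr_gcd1 (R : ringType) (u : R) a b :
  (0 < a)%N -> u ^+ a = 1 -> u ^+ b = 1 -> u ^+ (gcdn a b) = 1.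
Proof.
move=> a0 ua ub; have [k _ /dvdnP [t ht]] := Bezoutl b a0.
have : u ^+ (gcdn a b + k * b) = 1 by rewrite ht mulnC exprM ua expr1n.
by rewrite exprD mulnC exprM ub expr1n mulr1.
Qed.

Lemma expr_modn (R : ringType) (u : R) n k : u ^+ n = 1 -> u ^+ (k %% n) = u ^+ k.
Proof.
move=> un; rewrite {2}(divn_eq k n) exprD mulnC exprM un expr1n mul1r //.
Qed.

Section FF.
Variable F : finFieldType.

Lemma card_unity_le d : (0 < d)%N -> (#|[pred x : F | x ^+ d == 1%R]| <= d)%N.
Proof.
move=> d0; rewrite cardE; apply: max_unity_roots => //; last exact: enum_uniq.
by apply/allP => x; rewrite mem_enum unity_rootE.
Qed.

Lemma mem_unity_seq d (w : seq F) : (0 < d)%N -> uniq w -> size w = d ->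
  all (fun x => x ^+ d == 1) w -> forall x, (x ^+ d == 1) = (x \in w).
Proof.
move=> d0 uw sw aw x; rewrite -unity_rootE; apply: (mem_unity_roots d0) => //.
by apply/allP => y /(allP aw); rewrite unity_rootE.
Qed.

Lemma sum_unity_seq (h : F -> algC) d (w : seq F) : (0 < d)%N -> uniq w -> size w = d ->
  all (fun x => x ^+ d == 1) w -> \sum_(x <- w) h x = \sum_(x | x ^+ d == 1) h x.
Proof.
move=> d0 uw sw aw; rewrite big_uniq //; apply: eq_bigl => x.
by rewrite (mem_unity_seq d0 uw sw aw).
Qed.

Lemma card_unity_seq d (w : seq F) : (0 < d)%N -> uniq w -> size w = d ->
  all (fun x => x ^+ d == 1) w -> #|[pred x : F | x ^+ d == 1]| = d.
Proof.
move=> d0 uw sw aw; rewrite -[RHS]sw -(card_uniqP uw); apply: eq_card => x.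
by rewrite !inE (mem_unity_seq d0 uw sw aw).
Qed.


Lemma sumr_constP (P : pred F) (x : algC) : \sum_(i | P i) x = x *+ #|P|.
Proof. exact: (sumr_const P x). Qed.

Lemma sumn_constP (P : pred F) (n : nat) : (\sum_(i | P i) n = #|P| * n)%N.
Proof. exact: (sum_nat_const P n). Qed.

Lemma double_sum (h : F -> algC) a b d :
 (0 < a)%N -> (0 < b)%N -> #|[pred x : F | x ^+ a == 1]| = a ->
 #|[pred x : F | x ^+ b == 1]| = b ->
 gcdn a b = d -> (a * b = d * #|F|.-1)%N ->
 \sum_(x | x ^+ a == 1) \sum_(y | y ^+ b == 1) h (x * y)
   = d%:R * \sum_(z | z != 0) h z.
Proof.
move=> a0 b0 ca cb gab ab.
pose c z := #|[pred x : F | (x ^+ a == 1) && ((x^-1 * z) ^+ b == 1)]|.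
have nz0 : forall x : F, x ^+ a == 1 -> x != 0.
  move=> x xa; apply: (contraTneq _ xa) => ->.
  by rewrite expr0n gtn_eqF //= eq_sym oner_eq0.
have step1 : forall h' : F -> algC,
    \sum_(x | x ^+ a == 1) \sum_(y | y ^+ b == 1) h' (x * y)
    = \sum_(z | z != 0) h' z *+ c z.
  move=> h'.
  have e1 : forall x, x ^+ a == 1 ->
      \sum_(y | y ^+ b == 1) h' (x * y) = \sum_(z | (x^-1 * z) ^+ b == 1) h' z.
    move=> x xa; symmetry; rewrite (reindex_inj (mulfI (nz0 x xa))) /=.
    by apply: eq_bigl => y; rewrite mulKf ?nz0.
  rewrite (eq_bigr _ e1).
  under eq_bigr do rewrite big_mkcond.
  rewrite exchange_big /=.
  rewrite (bigD1 0) //= big1 ?add0r; last first.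
    by move=> x _; rewrite mulr0 expr0n gtn_eqF //= eq_sym oner_eq0.
  apply: eq_bigr => z _; rewrite -big_mkcondr; exact: sumr_constP.
have d0 : (0 < d)%N by rewrite -gab gcdn_gt0 a0.
have step2 : forall z, (c z <= d)%N.
  move=> z; case: (pickP [pred x : F | (x ^+ a == 1) && ((x^-1 * z) ^+ b == 1)]);
    last by move=> none; rewrite /c eq_card0.
  move=> x0 /andP [x0a x0b]; have x0nz := nz0 x0 x0a.
  have -> : c z = #|[pred u : F | ((u * x0) ^+ a == 1) && (((u * x0)^-1 * z) ^+ b == 1)]|.
    rewrite /c -!sum1_card (reindex_inj (mulIf x0nz)) /=.
    by apply: eq_bigl => u; rewrite !inE.
  apply: leq_trans (subset_leq_card _) (card_unity_le d0); apply/subsetP => u; rewrite !inE.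
  case/andP => ua ub; rewrite -gab; apply/eqP; apply: expr_gcd1 a0 _ _.
    by move: ua; rewrite exprMn (eqP x0a) mulr1 => /eqP.
  have : (u^-1 * (x0^-1 * z)) ^+ b = 1.
    by rewrite -(eqP ub) invfM mulrA (mulrC u^-1).
  by rewrite exprMn (eqP x0b) mulr1 exprVn => /eqP; rewrite invr_eq1 => /eqP.
have step3 : (\sum_(z : F | z != 0%R) c z = a * b)%N.
  have := step1 (fun _ => 1).
  under eq_bigr do rewrite sumr_constP.
  rewrite sumr_constP cb ca -mulrnA.
  by rewrite -natr_sum => /eqP; rewrite eqr_nat mulnC => /eqP <-.
have step4 : forall z, z != 0 -> c z = d.
  have tot : (\sum_(z : F | z != 0%R) (d - c z) = 0)%N.
    rewrite sumnB; last by move=> z _; exact: step2.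
    have cc : #|(fun i : F => i != 0)| = #|F|.-1 by exact: (cardC1 (0:F)).
    by rewrite step3 sumn_constP ab mulnC cc subnn.
  move/eqP: tot; rewrite sum_nat_eq0 => /forallP tot z nz.
  have := tot z; rewrite nz /= subn_eq0 => le.
  by apply/eqP; rewrite eqn_leq step2.
rewrite step1 mulr_sumr; apply: eq_bigr => z nz.
by rewrite step4 // mulr_natl.
Qed.

End FF.


Lemma sum_ordS n (G : nat -> algC) :
  \sum_(k < n | (0 < k)%N) G k = \sum_(k < n.-1) G k.+1.
Proof.
case: n => [|n]; first by rewrite !big_ord0.
by rewrite big_mkcond big_ord_recl /= add0r.
Qed.

Section Fp.
Variable F : finFieldType.
Variable p : nat.
Hypothesis pp : prime p.
Hypothesis pc : p \in [pchar F].

Lemma natr_eq_mod u v : (u%:R : F) = v%:R -> u = v %[mod p].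
Proof.
move=> e; wlog le : u v e / (u <= v)%N.
  move=> H; case: (leqP u v) => uv; first exact: H.
  by symmetry; apply: H (esym e) (ltnW uv).
by apply/eqP; rewrite eq_sym eqn_mod_dvd // (dvdn_pcharf pc) natrB // e subrr.
Qed.

Lemma natr_lt_inj u v : (u < p)%N -> (v < p)%N -> (u%:R : F) = v%:R -> u = v.
Proof. by move=> up vp /natr_eq_mod; rewrite !modn_small. Qed.

Lemma fermat_nat k : (k%:R : F) ^+ p = k%:R.
Proof. by have := pFrobenius_aut_nat pc k; rewrite pFrobenius_autE. Qed.

Lemma fermat_unit (x : F) : x ^+ p = x -> x != 0 -> x ^+ p.-1 = 1.
Proof.
move=> xp xnz; apply: (mulIf xnz); rewrite mul1r -exprSr prednK //.
exact: prime_gt0.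
Qed.

Definition wp : seq F := [seq ((val k).+1%:R : F) | k <- enum 'I_p.-1].

Lemma wp_props : [/\ uniq wp, size wp = p.-1 & all (fun x => x ^+ p.-1 == 1) wp].
Proof.
have p0 := prime_gt0 pp.
split.
- rewrite map_inj_uniq ?enum_uniq // => i j e; apply: val_inj.
  have hi := ltn_ord i; have hj := ltn_ord j.
  have : (val i).+1 = (val j).+1.
    by apply: (natr_lt_inj _ _ e); rewrite -ltn_predRL.
  by case.
- by rewrite size_map size_enum_ord.
- apply/allP => x /mapP [k _ ->]; apply/eqP; apply: fermat_unit; first exact: fermat_nat.
  have hk : ((val k).+1 < p)%N by rewrite -ltn_predRL; exact: (ltn_ord k).
  by rewrite -(dvdn_pcharf pc) gtnNdvd.
Qed.

Lemma sum_Fp (h : F -> algC) :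
  \sum_(k < p | (0 < k)%N) h (k%:R) = \sum_(x | x ^+ p.-1 == 1) h x.
Proof.
have [u s a] := wp_props.
rewrite -(sum_unity_seq h _ u s a); last by have := prime_gt1 pp; lia.
rewrite big_map big_enum /= (sum_ordS p (fun k => h k%:R)) /=; exact: eq_bigl.
Qed.

Lemma Fp_elt (y : F) : y ^+ p = y -> exists k : 'I_p, (val k)%:R = y.
Proof.
move=> yp; have [-> | ynz] := eqVneq y 0.
  by exists (Ordinal (prime_gt0 pp)).
have [u s a] := wp_props.
have := fermat_unit yp ynz => /eqP.
rewrite (mem_unity_seq _ u s a); last by have := prime_gt1 pp; lia.
case/mapP => k _ ->.
have hk : ((val k).+1 < p)%N by rewrite -ltn_predRL; exact: (ltn_ord k).
by exists (Ordinal hk).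
Qed.

Variable m : nat.
Hypothesis m0 : (0 < m)%N.
Hypothesis cF : #|F| = (p ^ m)%N.

Lemma trD (x y : F) : trF p m (x + y) = trF p m x + trF p m y.
Proof.
rewrite /trF -big_split; apply: eq_bigr => j _; apply: exprDn_pchar.
by rewrite pnatX (pnatE _ pp) pc.
Qed.

Lemma trFp (x : F) : trF p m x ^+ p = trF p m x.
Proof.
rewrite /trF -pFrobenius_autE (rmorph_sum (pFrobenius_aut pc)) /=.
under eq_bigr do rewrite pFrobenius_autE -exprM -expnSr.
move: m0 cF; case: m => [//|m'] _ cF'.
rewrite big_ord_recr big_ord_recl /= -cF' expf_card expn0 expr1 addrC.
by [].
Qed.

Lemma tr_nat_spec (x : F) : (tr_nat p m x)%:R = trF p m x /\ (tr_nat p m x < p)%N.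
Proof.
rewrite /tr_nat; case: pickP => [k /eqP hk | none] /=.
  by split; [rewrite hk | exact: ltn_ord].
have [k hk] := Fp_elt (trFp x).
by have := none k; rewrite hk eqxx.
Qed.

Lemma zeta_p : zeta p ^+ p = 1.
Proof. by rewrite /zeta exprAC rootCK ?prime_gt0 // sqrrN expr1n. Qed.

Lemma zeta_neq1 : zeta p != 1.
Proof.
rewrite /zeta sqrf_eq1; apply/norP; split.
  apply/eqP => w1; have := rootCK (prime_gt0 pp) (-1 : algC); rewrite w1 expr1n.
  have h : (-1 : algC) < 1 := lt_trans (@ltrN10 _) ltr01.
  by move/eqP; rewrite eq_sym (lt_eqF h).
apply/eqP => w1; have := rootC_lt0 (-1 : algC) (prime_gt1 pp).
by rewrite w1 (@ltrN10 algC).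
Qed.

Lemma zeta_pow_neq1 t : (0 < t)%N -> (t < p)%N -> zeta p ^+ t != 1.
Proof.
move=> t0 tp; apply/eqP => zt.
have := expr_gcd1 (prime_gt0 pp) zeta_p zt.
have : coprime p t by rewrite prime_coprime // gtnNdvd.
rewrite /coprime => /eqP ->; rewrite expr1 => /eqP; apply/negP; exact: zeta_neq1.
Qed.

Lemma psiD (x y : F) : psi p m (x + y) = psi p m x * psi p m y.
Proof.
have [ex _] := tr_nat_spec x; have [ey _] := tr_nat_spec y.
have [exy _] := tr_nat_spec (x + y).
have e : (tr_nat p m (x + y))%:R = ((tr_nat p m x + tr_nat p m y)%N%:R : F).
  by rewrite natrD ex ey exy trD.
rewrite /psi -exprD -(expr_modn (tr_nat p m (x + y)) zeta_p).
by rewrite (natr_eq_mod e) expr_modn // zeta_p.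
Qed.

Lemma psi0 : psi p m (0 : F) = 1.
Proof.
have [e lt] := tr_nat_spec (0 : F).
have : trF p m (0 : F) = 0 by rewrite /trF big1 // => j _; rewrite expr0n expn_eq0 eqn0Ngt prime_gt0.
move=> t0; have h : tr_nat p m (0 : F) = 0%N.
  by apply: (natr_lt_inj lt (prime_gt0 pp)); rewrite e t0.
by rewrite /psi h expr0.
Qed.

Lemma tr_nonzero : exists y : F, trF p m y != 0.
Proof.
move: m0 cF; case: m => [//|m'] _ cF'.
pose P : {poly F} := \sum_(j < m'.+1) 'X^(p ^ j).
have hP : forall x, P.[x] = trF p m'.+1 x.
  by move=> x; rewrite horner_sum; apply: eq_bigr => j _; rewrite hornerXn.
have p1 := prime_gt1 pp.
have cP : P`_(p ^ m') = 1.
  rewrite coef_sum big_ord_recr /= coefXn eqxx big1 ?add0r // => j _.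
  by rewrite coefXn (eqn_exp2l _ _ p1) gtn_eqF.
have P0 : P != 0 by apply/eqP => P0; move: cP; rewrite P0 coef0 => /eqP; rewrite eq_sym oner_eq0.
have sP : (size P <= (p ^ m').+1)%N.
  apply: leq_trans (size_sum _ _ _) _; apply/bigmax_leqP => j _.
  by rewrite size_polyXn ltnS (leq_exp2l _ _ p1) -ltnS.
have : ~~ all (root P) (enum F).
  apply/negP => al; have := max_poly_roots P0 al (enum_uniq _).
  rewrite -cardE cF' => lt; have := leq_trans lt sP.
  rewrite expnS; have : (0 < p ^ m')%N by rewrite expn_gt0 prime_gt0.
  set t := (p ^ m')%N => t0; nia.
case/allPn => y _; rewrite /root hP => ny; by exists y.
Qed.

Lemma sum_psi : \sum_(x : F) psi p m x = 0.
Proof.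
have [y ny] := tr_nonzero.
have [e lt] := tr_nat_spec y.
have t0 : (0 < tr_nat p m y)%N.
  by rewrite lt0n; apply: contraNneq ny => h; rewrite -e h.
have py : psi p m y != 1 by exact: zeta_pow_neq1.
set S := \sum_x _.
have e1 : S = \sum_x psi p m (x + y) by rewrite /S (reindex_inj (addIr y)).
have : S = psi p m y * S.
  rewrite {1}e1 /S mulr_sumr; apply: eq_bigr => x _.
  by rewrite psiD mulrC.
move/eqP; rewrite -subr_eq0 -{1}(mul1r S) -mulrBl mulf_eq0 subr_eq0 eq_sym (negbTE py) /=.
by move/eqP.
Qed.

End Fp.


Section Q.
Variable F : finFieldType.
Hypothesis ev : ~~ odd #|F|.-1.

Lemma unit_pow (x : F) : x != 0 -> x ^+ #|F|.-1 = 1.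
Proof.
move=> xnz; apply: (mulIf xnz); rewrite mul1r -exprSr prednK ?expf_card //.
by apply: leq_trans (finNzRing_gt1 F).
Qed.

Lemma gen_exists : exists g : F, #|F|.-1.-primitive_root g.
Proof.
have n0 : (0 < #|F|.-1)%N by rewrite ltn_predRL; exact: finNzRing_gt1.
have : has #|F|.-1.-primitive_root (enum [pred x : F | x != 0]).
  apply: cyclic.has_prim_root => //; last by rewrite -cardE (cardC1 (0 : F)).
    by apply/allP => x; rewrite mem_enum inE unity_rootE => /unit_pow ->.
  exact: enum_uniq.
by case/hasP => g _ pg; exists g.
Qed.

Lemma qcharM (x y : F) : qchar (x * y) = qchar x * qchar y.
Proof.
have [g pg] := gen_exists.
have gnz : g != 0.
  apply/eqP => g0; have := prim_expr_order pg; rewrite g0 expr0n gtn_eqF; last exact: prim_order_gt0 pg.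
  by move/eqP; rewrite eq_sym oner_eq0.
have qg : forall k, qchar (g ^+ k) = (-1) ^+ k.
  move=> k; rewrite /qchar expf_eq0 (negbTE gnz) andbF.
  case: (boolP (odd k)) => ok.
    have -> : [exists y, y ^+ 2 == g ^+ k] = false.
      apply/negbTE/existsPn => z; apply/negP => /eqP hy.
      have : z ^+ 2 != 0 by rewrite hy expf_eq0 (negbTE gnz) andbF.
      rewrite expf_eq0 /= => znz.
      have [j hj] := prim_rootP pg (unit_pow znz).
      rewrite hj -exprM in hy; move/eqP: hy; rewrite (eq_prim_root_expr pg) => /eqP hm.
      have := congr1 odd hm; rewrite !odd_mod ?(negbTE ev) // oddM /= andbF ok.
      by [].
    by rewrite -signr_odd ok expr1.
  have -> : [exists y, y ^+ 2 == g ^+ k] = true.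
    by apply/existsP; exists (g ^+ k./2); rewrite -exprM muln2 even_halfK.
  by rewrite -signr_odd (negbTE ok).
have [->|xnz] := eqVneq x 0; first by rewrite mul0r /qchar eqxx mul0r.
have [->|ynz] := eqVneq y 0; first by rewrite mulr0 /qchar eqxx mulr0.
have [i ->] := prim_rootP pg (unit_pow xnz); have [j ->] := prim_rootP pg (unit_pow ynz).
by rewrite -exprD !qg exprD.
Qed.

Lemma qchar_inv (c : F) : qchar (c^-1) = qchar c.
Proof.
have [->|cnz] := eqVneq c 0; first by rewrite invr0.
have e : c^-1 = c^-1 ^+ 2 * c by rewrite expr2 -mulrA mulVf // mulr1.
rewrite {1}e qcharM.
have -> : qchar (c^-1 ^+ 2) = 1.
  rewrite /qchar expf_eq0 invr_eq0 (negbTE cnz) andbF.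
  by have -> : [exists y, y ^+ 2 == c^-1 ^+ 2] by apply/existsP; exists c^-1.
by rewrite mul1r.
Qed.

End Q.


Lemma wt_props (F : finFieldType) b (t : F) : b.-primitive_root t ->
  let w := [seq t ^+ (val i) | i <- enum 'I_b] in
  [/\ uniq w, size w = b & all (fun x => x ^+ b == 1) w].
Proof.
move=> pt w; split.
- rewrite map_inj_uniq ?enum_uniq // => i j /eqP; rewrite (eq_prim_root_expr pt).
  rewrite (modn_small (ltn_ord i)) (modn_small (ltn_ord j)) => /eqP e.
  exact: val_inj.
- by rewrite size_map size_enum_ord.
- by apply/allP => x /mapP [i _ ->]; rewrite exprAC (prim_expr_order pt) expr1n.
Qed.

Lemma sum_theta (F : finFieldType) b (t : F) (G : F -> algC) : b.-primitive_root t ->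
  \sum_(i < b) G (t ^+ i) = \sum_(y | y ^+ b == 1) G y.
Proof.
move=> pt; have [u s a] := wt_props pt.
rewrite -(sum_unity_seq G (prim_order_gt0 pt) u s a) big_map big_enum /=.
exact: eq_bigl.
Qed.

Unset Implicit Arguments. Set Strict Implicit.

Theorem corollary3 (F : finFieldType) (p m N : nat) (theta c : F) :
  prime p -> odd p -> (0 < m)%N -> p \in [pchar F] -> #|F| = (p ^ m)%N ->
  (0 < N)%N -> (N %| p.-1)%N -> coprime N ((p ^ m).-1 %/ p.-1) ->
  (((p ^ m).-1 %/ N).-primitive_root theta) -> c != 0 ->
  (\sum_(k < p | (0 < k)%N) \sum_(i < (p ^ m).-1 %/ N)
      psi p m ((k%:R : F) * c * theta ^+ i)
     = - ((p.-1 %/ N)%:R : algC))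
  /\
  (forall a : F,
    \sum_(k < p | (0 < k)%N) \sum_(i < (p ^ m).-1 %/ N)
      psi p m ((k%:R : F) * c * theta ^+ i) * qchar ((k%:R : F) * a * theta ^+ i)
    = (p.-1 %/ N)%:R * qchar (a * c) *
        \sum_(x : F | x != 0) psi p m x * qchar x).
Proof.
move=> pp op m0 pc cF N0 Ndvd cop prim cnz.
set b := ((p ^ m).-1 %/ N)%N.
set d := (p.-1 %/ N)%N.
have p1 := prime_gt1 pp.
have pm0 : (0 < p.-1)%N by lia.
have b0 : (0 < b)%N := prim_order_gt0 prim.
have dvd1 : (p.-1 %| (p ^ m).-1)%N.
  have pm1 : (1 <= p ^ m)%N by rewrite expn_gt0 prime_gt0.
  rewrite -[(p ^ m).-1]subn1 -(eqn_mod_dvd _ pm1).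
  have hp : (p %% p.-1 = 1 %% p.-1)%N by rewrite -{1}(prednK (prime_gt0 pp)) -addn1 modnDl.
  by rewrite -modnXm hp modnXm exp1n.
set M := ((p ^ m).-1 %/ p.-1)%N.
have eM : (p ^ m).-1 = (M * p.-1)%N by rewrite divnK.
have eD : p.-1 = (d * N)%N by rewrite divnK.
have eb : b = (M * d)%N by rewrite /b eM eD mulnA mulnK.
have gab : gcdn p.-1 b = d.
  by rewrite eb eD [(M * d)%N]mulnC -muln_gcdr (eqP cop) muln1.
have ab : (p.-1 * b = d * #|F|.-1)%N.
  by rewrite cF eM eb eD; ring.
have [u s a] := wp_props pp pc.
have ca := card_unity_seq pm0 u s a.
have [u' s' a'] := wt_props prim.
have cb := card_unity_seq b0 u' s' a'.
have red : forall h : F -> algC,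
    \sum_(k < p | (0 < k)%N) \sum_(i < b) h (k%:R * theta ^+ i)
    = d%:R * \sum_(z | z != 0) h z.
  move=> h.
  rewrite (sum_Fp pp pc (fun x => \sum_(i < b) h (x * theta ^+ i))).
  under eq_bigr do rewrite (sum_theta (fun y => h (_ * y)) prim).
  exact: double_sum pm0 b0 ca cb gab ab.
have ev : ~~ odd #|F|.-1.
  by rewrite cF -oddS prednK ?expn_gt0 ?prime_gt0 // oddX op orbT.
split.
  transitivity (\sum_(k < p | (0 < k)%N) \sum_(i < b)
                  psi p m (c * (k%:R * theta ^+ i))).
    by apply: eq_bigr => k _; apply: eq_bigr => i _; rewrite -mulrA mulrCA.
  rewrite (red (fun z => psi p m (c * z))).
  have -> : \sum_(z | z != 0) psi p m (c * z) = \sum_(z : F | z != 0) psi p m z.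
    symmetry; rewrite (reindex_inj (mulfI cnz)) /=; apply: eq_bigl => z.
    by rewrite mulf_eq0 (negbTE cnz).
  have := sum_psi pp pc m0 cF; rewrite (bigD1 0) //= psi0 // => h.
  have -> : \sum_(z : F | z != 0) psi p m z = -1.
    by apply/eqP; rewrite -addr_eq0 addrC h.
  by rewrite mulrN1.
move=> a0.
transitivity (\sum_(k < p | (0 < k)%N) \sum_(i < b)
                (fun z => psi p m (c * z) * qchar (a0 * z)) (k%:R * theta ^+ i)).
  by apply: eq_bigr => k _; apply: eq_bigr => i _; rewrite /= -!mulrA !(mulrCA k%:R).
rewrite (red (fun z => psi p m (c * z) * qchar (a0 * z))) -mulrA; congr (_ * _).
rewrite (reindex_inj (mulfI (invr_neq0 cnz))) /= mulr_sumr.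
apply: eq_big => [z | z _]; first by rewrite mulf_eq0 invr_eq0 (negbTE cnz).
rewrite mulVKf // (mulrA a0) (qcharM ev (a0 * c^-1)) (qcharM ev a0) qchar_inv // -(qcharM ev a0 c).
by rewrite mulrCA.
Qed.
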